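(* Let $\gamma>0$. There exists a sequence of positive numbers $(\alpha_n)_{n\ge2}$ such that, with the convention $\alpha_1=0$, $$\sup_{n\ge2}\Big\{(1+2\nu_n)\Big(p_n+\frac{|q_n|}{\alpha_n}+|q_{n-1}|\,\alpha_{n-1}\Big)\Big\}<1 .$$
   Context: For $\gamma>0$ and integers $n\ge1$ define $\nu_n=\nu_n(\gamma)=(-1)^n\frac{\Gamma(2\gamma)\Gamma(n+\gamma)}{\Gamma(\gamma)\Gamma(n+2\gamma)}$, $p_n=p_n(\gamma)=\frac{2n(n-1)+(6n-4)\gamma+6\gamma^2}{(2n+3\gamma)(2n+3\gamma-2)}=\frac12+\frac{-\gamma+\frac32\gamma^2}{(2n+3\gamma)(2n+3\gamma-2)}$, $q_n=q_n(\gamma)=-\frac{1}{2n+3\gamma}\sqrt{\frac{(n+3\gamma-1)(n+1)(n+\gamma)}{(2n+3\gamma+1)(2n+3\gamma-1)}}$. (These arise from the Jacobi polynomials orthogonal for Beta$(\gamma,2\gamma)$: $p_n$ and $q_n$ are the diagonal and normalized off-diagonal entries of multiplication by $1-u$.) *)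

(* Defs.v *)
From Stdlib Require Import Reals Lra Lia.
Open Scope R_scope.

(* Gamma(n+g)/Gamma(g) * Gamma(2g)/Gamma(n+2g)
   = prod_{k=0}^{n-1} (g+k)/(2g+k)   (functional equation Gamma(x+1)=x Gamma(x)).
   Stdlib has no Gamma function, so we write out this ratio directly. *)
Fixpoint gamma_ratio (g : R) (n : nat) : R :=
  match n with
  | O => 1
  | S m => gamma_ratio g m * ((g + INR m) / (2 * g + INR m))
  end.

Definition nu (g : R) (n : nat) : R := (-1) ^ n * gamma_ratio g n.

Definition p_ (g : R) (n : nat) : R :=
  (2 * INR n * (INR n - 1) + (6 * INR n - 4) * g + 6 * g ^ 2)
  / ((2 * INR n + 3 * g) * (2 * INR n + 3 * g - 2)).

Definition q_ (g : R) (n : nat) : R :=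
  - (1 / (2 * INR n + 3 * g)) *
    sqrt (((INR n + 3 * g - 1) * (INR n + 1) * (INR n + g))
          / ((2 * INR n + 3 * g + 1) * (2 * INR n + 3 * g - 1))).

(* Main.v *)
Require Import Defs.
From Stdlib Require Import Reals Lra Lia.
Open Scope R_scope.

Definition pp (g k : R) := (2*k*(k-1) + (6*k-4)*g + 6*g^2)/((2*k+3*g)*(2*k+3*g-2)).
Definition qq (g k : R) := ((k+3*g-1)*(k+1)*(k+g))/((2*k+3*g+1)*(2*k+3*g-1)) / (2*k+3*g)^2.
Definition mm (g r k : R) := 1 - (1+2*r)*pp g k.

Ltac nn := match goal with
 | |- 0 <= _ + _ => apply Rplus_le_le_0_compat; [nn|nn]
 | |- 0 <= _ * _ => apply Rmult_le_pos; [nn|nn]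
 | |- 0 <= _ ^ _ => apply pow_le; nn
 | _ => first [assumption | lra]
 end.
Ltac ps := match goal with
 | |- 0 < _ + _ => first [ apply Rplus_lt_le_0_compat; [ps | nn] | apply Rplus_le_lt_0_compat; [nn | ps] ]
 | |- 0 < _ * _ => apply Rmult_lt_0_compat; [ps|ps]
 | |- 0 < _ ^ _ => apply pow_lt; ps
 | _ => first [assumption | lra]
 end.



Lemma fin_le a b q : b - a = q -> 0 <= q -> a <= b.
Proof. intros; lra. Qed.

Lemma fin_lt e q : e = q -> 0 < q -> 0 < e.
Proof. intros; lra. Qed.

Lemma divnn a b : 0 <= a -> 0 < b -> 0 <= a / b.
Proof. intros; unfold Rdiv; apply Rmult_le_pos; [lra | left; apply Rinv_0_lt_compat; lra]. Qed.

Lemma divpos0 a b : 0 < a -> 0 < b -> 0 < a / b.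
Proof. intros; unfold Rdiv; apply Rmult_lt_0_compat; [lra| apply Rinv_0_lt_compat; lra]. Qed.

Lemma div_le a b c d : 0 < b -> 0 < d -> a*d <= c*b -> a/b <= c/d.
Proof.
intros Hb Hd H.
assert (E : a / b - c / d = (a*d - c*b) * /(b*d)) by (field; lra).
assert (0 < /(b*d)) by (apply Rinv_0_lt_compat; nra).
assert ((a*d - c*b) * /(b*d) <= 0) by nra.
lra.
Qed.

Lemma frac_max X X3 L p : 0 <= X3 -> X3 <= X -> X <= 1 -> 0 < 1 - p -> 0 < 1-(1+(1-X3)*L)*p ->
  X/(1-(1+(1-X)*L)*p) <= Rmax (1/(1-p)) (X3/(1-(1+(1-X3)*L)*p)).
Proof.
intros H0 H1 H2 H3 H4.
set (a := 1 - (1+L)*p). set (b := L*p).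
assert (EM : 1-(1+(1-X)*L)*p = a + b*X) by (unfold a,b; ring).
assert (E1 : 1-p = a + b) by (unfold a, b; ring).
assert (E3 : 1-(1+(1-X3)*L)*p = a + b*X3) by (unfold a,b; ring).
rewrite EM, E3. rewrite E3 in H4. rewrite E1 in *.
assert (HM : 0 < a + b*X) by (destruct (Rle_dec 0 b); nra).
destruct (Rle_dec 0 a).
- apply Rle_trans with (1/(a+b)); [|apply Rmax_l].
  apply div_le; try lra. nra.
- apply Rle_trans with (X3/(a+b*X3)); [|apply Rmax_r].
  apply div_le; try lra. nra.
Qed.

Lemma sumABC g : 0 < g ->
  1/2 + g^2/(6*(1+g)^2) + 1/(4*(1+g)) + (21/100 + 7/10*g)/(1+g)^2 <= 97/100.
Proof.
intros Hg.
apply (fin_le _ _ (((6 + (12*g + 182*g^2)) + (534*g^3 + (540*g^4 + 182*g^5))) / ((25)*((6 + (12*g + 6*g^2)))*((4 + 4*g))*((1 + (2*g + 1*g^2)))))).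
- field. repeat split; apply Rgt_not_eq; unfold Rgt; first [lra | ps].
- apply divnn; [nn|ps].
Qed.

Lemma termA g j n : 0 < g -> 0 <= j -> n = 3 + 2*j -> pp g n <= 1/2 + g^2/(6*(1+g)^2).
Proof.
intros Hg Hj Hn. subst n. unfold pp, qq.
apply (fin_le _ _ ((((6*g + (27*g^2 + 18*g^3)) + (40*g^2*j + (16*g^2*j^2 + 24*g^3*j))))/((1)*((6 + (12*g + 6*g^2)))*((6 + (3*g + 4*j)))*((4 + (3*g + 4*j)))))).
- field. repeat split; apply Rgt_not_eq; unfold Rgt; first [lra | ps].
- apply divnn; [nn|ps].
Qed.

Lemma termB0 g j n : 0 < g -> 0 <= j -> n = 3 + 2*j -> 4*qq g n * (1/(1 - pp g (n+1))) <= 1/(4*(1+g)).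
Proof.
intros Hg Hj Hn. subst n. unfold pp, qq.
apply (fin_le _ _ ((((((11808 + (20712*g + 14292*g^2)) + ((9150*g^3 + 5877*g^4) + (1998*g^5 + 243*g^6))) + ((55632*j + (107680*j^2 + 108736*j^3)) + ((60288*j^4 + 17408*j^5) + (2048*j^6 + 99008*g*j)))) + (((167968*g*j^2 + (132480*g*j^3 + 49664*g*j^4)) + ((7168*g*j^5 + 69716*g^2*j) + (95848*g^2*j^2 + 51712*g^2*j^3))) + ((9728*g^2*j^4 + (31788*g^3*j + 28032*g^3*j^2)) + ((7296*g^3*j^3 + 10044*g^4*j) + (3816*g^4*j^2 + 1404*g^5*j))))))/((1)*((4 + 4*g))*((7 + (3*g + 4*j)))*((5 + (3*g + 4*j)))*((6 + (3*g + 4*j)))*((6 + (3*g + 4*j)))*(((24 + (22*g + 3*g^2)) + (28*j + (8*j^2 + 12*g*j))))))).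
- field. repeat split; apply Rgt_not_eq; unfold Rgt; first [lra | ps].
- apply divnn; [nn|ps].
Qed.

Lemma termB1 g j n : 0 < g -> 0 <= j -> n = 3 + 2*j -> 4*qq g n * ((3*g/(2*(2*g+1)))/(1 - (1 + (1 - (3*g/(2*(2*g+1))))*((g+n)/(2*g+n)))*pp g (n+1))) <= 1/(4*(1+g)).
Proof.
intros Hg Hj Hn. subst n. unfold pp, qq.
apply (fin_le _ _ (((((((363744*g + 1699920*g^2) + (3027384*g^3 + (2887884*g^4 + 1806804*g^5))) + ((857880*g^6 + (302076*g^7 + 64476*g^8)) + (5832*g^9 + (1713312*g*j + 3495168*g*j^2)))) + (((3983104*g*j^3 + 2727424*g*j^4) + (1118720*g*j^5 + (253952*g*j^6 + 24576*g*j^7))) + ((7591104*g^2*j + (14383872*g^2*j^2 + 14912512*g^2*j^3)) + (9091840*g^2*j^4 + (3243008*g^2*j^5 + 622592*g^2*j^6))))) + ((((49152*g^2*j^7 + 12463656*g^3*j) + (20915712*g^3*j^2 + (18323104*g^3*j^3 + 8842240*g^3*j^4))) + ((2229248*g^3*j^5 + (229376*g^3*j^6 + 10589544*g^4*j)) + (14897856*g^4*j^2 + (10145088*g^4*j^3 + 3363840*g^4*j^4)))) + (((436224*g^4*j^5 + 5493288*g^5*j) + (5914752*g^5*j^2 + (2718816*g^5*j^3 + 454656*g^5*j^4))) + ((1903608*g^6*j + (1336320*g^6*j^2 + 301248*g^6*j^3)) + (416016*g^7*j + (138240*g^7*j^2 + 41472*g^8*j)))))))/((1)*((4 + 4*g))*((7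 + (3*g + 4*j)))*((5 + (3*g + 4*j)))*((6 + (3*g + 4*j)))*((6 + (3*g + 4*j)))*((2 + 4*g))*((((276*g + 402*g^2) + (174*g^3 + (18*g^4 + 460*g*j))) + ((256*g*j^2 + 48*g*j^3) + (452*g^2*j + (128*g^2*j^2 + 96*g^3*j)))))))).
- field. repeat split; apply Rgt_not_eq; unfold Rgt; first [lra | ps].
- apply divnn; [nn|ps].
Qed.

Lemma termC0 g j n : 0 < g -> 0 <= j -> n = 3 + 2*j -> 4*qq g (n-1) * (1/(1 - pp g (n-1))) <= (21/100 + 7/10*g)/(1+g)^2.
Proof.
intros Hg Hj Hn. subst n. unfold pp, qq.
apply (fin_le _ _ (((((((960 + 31296*g) + (177900*g^2 + 419310*g^3)) + ((512289*g^4 + 343656*g^5) + (120123*g^6 + 17010*g^7))) + (((15808*j + 91584*j^2) + (238912*j^3 + 304512*j^4)) + ((185344*j^5 + 43008*j^6) + (331968*g*j + (1268352*g*j^2 + 2266880*g*j^3))))) + ((((2035456*g*j^4 + 879616*g*j^5) + (143360*g*j^6 + 1382356*g^2*j)) + ((3803272*g^2*j^2 + 4748032*g^2*j^3) + (2740736*g^2*j^4 + (593920*g^2*j^5 + 2372852*g^3*j)))) + (((4550128*g^3*j^2 + 3593728*g^3*j^3) + (1003520*g^3*j^4 + 2004900*g^4*j)) + ((2409864*g^4*j^2 + 908160*g^4*j^3) + (834228*g^5*j + (474480*g^5*j^2 + 137160*g^6*j)))))))/((100)*((1 + (2*g + 1*g^2)))*((5 + (3*g + 4*j)))*((3 + (3*g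 + 4*j)))*((4 + (3*g + 4*j)))*((4 + (3*g + 4*j)))*(((4 + (10*g + 3*g^2)) + (12*j + (8*j^2 + 12*g*j))))))).
- field. repeat split; apply Rgt_not_eq; unfold Rgt; first [lra | ps].
- apply divnn; [nn|ps].
Qed.

Lemma termC1 g j n : 0 < g -> 0 <= j -> n = 3 + 2*j -> 4*qq g (n-1) * ((3*g/(2*(2*g+1)))/(1 - (1 + (1 - (3*g/(2*(2*g+1))))*((2*g+n-1)/(g+n-1)))*pp g (n-1))) <= (21/100 + 7/10*g)/(1+g)^2.
Proof.
intros Hg Hj Hn. subst n. unfold pp, qq.
apply (fin_le _ _ (((((((2880*g + (40608*g^2 + 185652*g^3)) + (407232*g^4 + (492975*g^5 + 351792*g^6))) + ((152793*g^7 + (39528*g^8 + 4860*g^9)) + (9984*g*j + (115200*g*j^2 + 569472*g*j^3)))) + (((1202880*g*j^4 + (1254528*g*j^5 + 642048*g*j^6)) + (129024*g*j^7 + (513216*g^2*j + 3109280*g^2*j^2))) + ((8882560*g^2*j^3 + (13163520*g^2*j^4 + 10482176*g^2*j^5)) + ((4252672*g^2*j^6 + 688128*g^2*j^7) + (3125928*g^3*j + 15855356*g^3*j^2))))) + ((((36000904*g^3*j^3 + (42129408*g^3*j^4 + 26045696*g^3*j^5)) + (7862272*g^3*j^6 + (860160*g^3*j^7 + 8140722*g^4*j))) + ((34813364*g^4*j^2 + (62873920*g^4*j^3 + 55663104*g^4*j^4)) + ((23724032*g^4*j^5 + 3850240*g^4*j^6) + (11405790*g^5*j + 39795348*g^5*j^2))))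 + (((54128856*g^5*j^3 + (32294016*g^5*j^4 + 7050240*g^5*j^5)) + (9341934*g^6*j + (24935628*g^6*j^2 + 22749888*g^6*j^3))) + ((6846720*g^6*j^4 + (4527810*g^7*j + 8191440*g^7*j^2)) + ((3756960*g^7*j^3 + 1214136*g^8*j) + (1112400*g^8*j^2 + 139320*g^9*j)))))))/((25)*((1 + (2*g + 1*g^2)))*((5 + (3*g + 4*j)))*((3 + (3*g + 4*j)))*((4 + (3*g + 4*j)))*((4 + (3*g + 4*j)))*((2 + 4*g))*((((24*g + 48*g^2) + (18*g^3 + 80*g*j)) + ((104*g*j^2 + 48*g*j^3) + (124*g^2*j + (88*g^2*j^2 + 36*g^3*j)))))))).
- field. repeat split; apply Rgt_not_eq; unfold Rgt; first [lra | ps].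
- apply divnn; [nn|ps].
Qed.

Lemma posP1 g j n : 0 < g -> 0 <= j -> n = 3 + 2*j -> 0 < 1 - pp g (n+1).
Proof.
intros Hg Hj Hn. subst n. unfold pp.
apply (fin_lt _ ((((24 + (22*g + 3*g^2)) + (28*j + (8*j^2 + 12*g*j))))/((1)*((8 + (3*g + 4*j)))*((6 + (3*g + 4*j)))))).
- field. repeat split; apply Rgt_not_eq; unfold Rgt; first [lra | ps].
- apply divpos0; [ps|ps].
Qed.

Lemma posM1 g j n : 0 < g -> 0 <= j -> n = 3 + 2*j -> 0 < 1 - (1 + (1 - (3*g/(2*(2*g+1))))*((g+n)/(2*g+n)))*pp g (n+1).
Proof.
intros Hg Hj Hn. subst n. unfold pp.
apply (fin_lt _ (((((276*g + 402*g^2) + (174*g^3 + (18*g^4 + 460*g*j))) + ((256*g*j^2 + 48*g*j^3) + (452*g^2*j + (128*g^2*j^2 + 96*g^3*j)))))/((1)*((2 + 4*g))*((3 + (2*g + 2*j)))*((8 + (3*g + 4*j)))*((6 + (3*g + 4*j)))))).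
- field. repeat split; apply Rgt_not_eq; unfold Rgt; first [lra | ps].
- apply divpos0; [ps|ps].
Qed.

Lemma posP2 g j n : 0 < g -> 0 <= j -> n = 3 + 2*j -> 0 < 1 - pp g (n-1).
Proof.
intros Hg Hj Hn. subst n. unfold pp.
apply (fin_lt _ ((((4 + (10*g + 3*g^2)) + (12*j + (8*j^2 + 12*g*j))))/((1)*((4 + (3*g + 4*j)))*((2 + (3*g + 4*j)))))).
- field. repeat split; apply Rgt_not_eq; unfold Rgt; first [lra | ps].
- apply divpos0; [ps|ps].
Qed.

Lemma posM2 g j n : 0 < g -> 0 <= j -> n = 3 + 2*j -> 0 < 1 - (1 + (1 - (3*g/(2*(2*g+1))))*((2*g+n-1)/(g+n-1)))*pp g (n-1).
Proof.
intros Hg Hj Hn. subst n. unfold pp.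
apply (fin_lt _ (((((24*g + 48*g^2) + (18*g^3 + 80*g*j)) + ((104*g*j^2 + 48*g*j^3) + (124*g^2*j + (88*g^2*j^2 + 36*g^3*j)))))/((1)*((2 + 4*g))*((2 + (1*g + 2*j)))*((4 + (3*g + 4*j)))*((2 + (3*g + 4*j)))))).
- field. repeat split; apply Rgt_not_eq; unfold Rgt; first [lra | ps].
- apply divpos0; [ps|ps].
Qed.

Lemma even_key g N : 0 < g -> 2 <= N ->
  g/((4+3*g)*(2*g+1)) <= 1 - (3*g+2)/(2*g+1) * pp g N.
Proof.
intros Hg HN. set (t := N - 2). replace N with (2+t) by (unfold t; ring).
assert (Ht : 0 <= t) by (unfold t; lra). clearbody t. unfold pp.
apply (fin_le _ _ (((((16*g + 36*g^2) + (18*g^3 + 12*g*t)) + ((4*g*t^2 + 30*g^2*t) + (6*g^2*t^2 + 18*g^3*t))))/((((32 + (160*g + 282*g^2)) + (207*g^3 + (54*g^4 + 48*t))) + ((16*t^2 + (180*g*t + 44*g*t^2)) + (204*g^2*t + (24*g^2*t^2 + 72*g^3*t))))))).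
{ field. repeat split; apply Rgt_not_eq; unfold Rgt; first [lra | nra | ps]. }
apply divnn; [nn | ps].
Qed.

Definition marg g k := 1 - (1 + 2*gamma_ratio g k) * p_ g k.
Definition alpha g k := if (k <=? 1)%nat then 0
  else if Nat.even k then 4 * Rabs (q_ g k) / marg g k
  else marg g (S k) / (4 * Rabs (q_ g k)).

Lemma divpos a b : 0 < a -> 0 < b -> 0 < a / b.
Proof. intros; unfold Rdiv; apply Rmult_lt_0_compat; [lra| apply Rinv_0_lt_compat; lra]. Qed.

Lemma gr_S g k : gamma_ratio g (S k) = gamma_ratio g k * ((g + INR k)/(2*g + INR k)).
Proof. reflexivity. Qed.

Lemma gr_pos g k : 0 < g -> 0 < gamma_ratio g k.
Proof.
intros Hg. induction k as [|k IH]; [simpl; lra|].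
rewrite gr_S. assert (0 <= INR k) by apply pos_INR.
apply Rmult_lt_0_compat; [exact IH| apply divpos; lra].
Qed.

Lemma gr_dec g k : 0 < g -> gamma_ratio g (S k) <= gamma_ratio g k.
Proof.
intros Hg. rewrite gr_S. assert (0 <= INR k) by apply pos_INR.
replace ((g + INR k)/(2*g + INR k)) with (1 - g/(2*g+INR k)) by (field; lra).
assert (0 < g/(2*g+INR k)) by (apply divpos; lra).
pose proof (gr_pos g k Hg). nra.
Qed.

Lemma gr_mono g k m : 0 < g -> (k <= m)%nat -> gamma_ratio g m <= gamma_ratio g k.
Proof.
intros Hg H. induction H; [lra|]. eapply Rle_trans; [apply gr_dec; exact Hg | assumption].
Qed.

Lemma gr2 g : 0 < g -> gamma_ratio g 2 = (g+1)/(2*(2*g+1)).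
Proof. intros Hg. simpl. field. lra. Qed.

Lemma gr3 g : 0 < g -> gamma_ratio g 3 = (g+2)/(4*(2*g+1)).
Proof. intros Hg. simpl. field. repeat split; lra. Qed.

Lemma pp_pos g N : 0 < g -> 1 <= N -> 0 < pp g N.
Proof.
intros Hg HN. unfold pp. apply divpos; [nra|]. apply Rmult_lt_0_compat; lra.
Qed.

Lemma qq_pos g N : 0 < g -> 1 <= N -> 0 < qq g N.
Proof.
intros Hg HN. unfold qq. apply divpos; [apply divpos|].
- apply Rmult_lt_0_compat; [apply Rmult_lt_0_compat|]; lra.
- apply Rmult_lt_0_compat; lra.
- apply pow_lt; lra.
Qed.

Lemma INR_ge1 k : (1 <= k)%nat -> 1 <= INR k.
Proof. intros H. apply le_INR in H. simpl in H. exact H. Qed.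

Lemma q_sq g k : 0 < g -> (1 <= k)%nat -> Rabs (q_ g k) * Rabs (q_ g k) = qq g (INR k).
Proof.
intros Hg Hk. pose proof (INR_ge1 k Hk) as HK.
rewrite <- Rabs_mult. rewrite Rabs_pos_eq by nra.
unfold q_, qq.
match goal with |- context [sqrt ?Z] => set (W := Z) end.
assert (HW : 0 <= W).
{ unfold W. left. apply divpos.
  - apply Rmult_lt_0_compat; [apply Rmult_lt_0_compat|]; lra.
  - apply Rmult_lt_0_compat; lra. }
transitivity ((1/(2*INR k+3*g))^2 * (sqrt W * sqrt W)); [ring|].
rewrite sqrt_sqrt by exact HW. unfold W. field. repeat split; lra.
Qed.

Lemma q_abs_pos g k : 0 < g -> (1 <= k)%nat -> 0 < Rabs (q_ g k).
Proof.
intros Hg Hk. pose proof (qq_pos g (INR k) Hg (INR_ge1 k Hk)) as H.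
rewrite <- q_sq in H by assumption.
destruct (Rabs_pos (q_ g k)) as [H1|H1]; [exact H1|]. rewrite <- H1 in H. lra.
Qed.

Lemma marg_lb g n : 0 < g -> (2 <= n)%nat -> g/((4+3*g)*(2*g+1)) <= marg g n.
Proof.
intros Hg Hn.
assert (HN : 2 <= INR n) by (apply le_INR in Hn; simpl in Hn; lra).
assert (Hr : gamma_ratio g n <= (g+1)/(2*(2*g+1))) by (rewrite <- gr2 by exact Hg; apply gr_mono; [exact Hg|lia]).
pose proof (even_key g (INR n) Hg HN) as E.
assert (Heq : (3*g+2)/(2*g+1) = 1 + 2*((g+1)/(2*(2*g+1)))) by (field; lra).
rewrite Heq in E. unfold marg. change (p_ g n) with (pp g (INR n)).
pose proof (pp_pos g (INR n) Hg ltac:(lra)).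
set (P := pp g (INR n)) in *. set (R2 := (g+1)/(2*(2*g+1))) in *.
nra.
Qed.


Lemma odd_key g N Nm Np r rp rm : 0 < g -> 3 <= N -> 0 < r -> r <= (g+2)/(4*(2*g+1)) ->
  Nm = N - 1 -> Np = N + 1 -> rp = r*(g+N)/(2*g+N) -> rm = r*(2*g+N-1)/(g+N-1) ->
  (1-2*r)*(pp g N + 4*qq g N / mm g rp Np + 4*qq g Nm / mm g rm Nm) <= 97/100.
Proof.
intros Hg HN Hr Hr3 -> -> -> ->.
set (j := (N-3)/2). assert (Hj : 0 <= j) by (unfold j; lra).
assert (HNj : N = 3 + 2*j) by (unfold j; lra). clearbody j.
set (X := 1 - 2*r).
assert (HX3 : 3*g/(2*(2*g+1)) <= X).
{ assert (1 - 2*((g+2)/(4*(2*g+1))) = 3*g/(2*(2*g+1))) by (field; lra). unfold X; lra. }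
assert (HX1 : X <= 1) by (unfold X; lra).
assert (HX30 : 0 <= 3*g/(2*(2*g+1))) by (left; apply divpos; lra).
assert (E1 : mm g (r*(g+N)/(2*g+N)) (N+1) = 1 - (1 + (1-X)*((g+N)/(2*g+N)))*pp g (N+1)).
{ unfold mm, X. field. lra. }
assert (E2 : mm g (r*(2*g+N-1)/(g+N-1)) (N-1) = 1 - (1 + (1-X)*((2*g+N-1)/(g+N-1)))*pp g (N-1)).
{ unfold mm, X. field. lra. }
rewrite E1, E2. fold X.
pose proof (frac_max X _ _ _ HX30 HX3 HX1 (posP1 g j N Hg Hj HNj) (posM1 g j N Hg Hj HNj)) as F1.
pose proof (frac_max X _ _ _ HX30 HX3 HX1 (posP2 g j N Hg Hj HNj) (posM2 g j N Hg Hj HNj)) as F2.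
set (M1 := 1 - (1 + (1-X)*((g+N)/(2*g+N)))*pp g (N+1)) in *.
set (M2 := 1 - (1 + (1-X)*((2*g+N-1)/(g+N-1)))*pp g (N-1)) in *.
assert (HQ1 : 0 < qq g N) by (apply qq_pos; lra).
assert (HQ2 : 0 < qq g (N-1)) by (apply qq_pos; lra).
assert (HP : 0 < pp g N) by (apply pp_pos; lra).
assert (B1 : 4*qq g N * (X/M1) <= 1/(4*(1+g))).
{ apply Rle_trans with (4*qq g N * Rmax (1/(1 - pp g (N+1)))
     (3*g/(2*(2*g+1))/(1 - (1 + (1 - 3*g/(2*(2*g+1)))*((g+N)/(2*g+N)))*pp g (N+1)))).
  { apply Rmult_le_compat_l; [lra | exact F1]. }
  unfold Rmax. destruct (Rle_dec _ _).
  - apply (termB1 g j N Hg Hj HNj).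
  - apply (termB0 g j N Hg Hj HNj). }
assert (B2 : 4*qq g (N-1) * (X/M2) <= (21/100 + 7/10*g)/(1+g)^2).
{ apply Rle_trans with (4*qq g (N-1) * Rmax (1/(1 - pp g (N-1)))
     (3*g/(2*(2*g+1))/(1 - (1 + (1 - 3*g/(2*(2*g+1)))*((2*g+N-1)/(g+N-1)))*pp g (N-1)))).
  { apply Rmult_le_compat_l; [lra | exact F2]. }
  unfold Rmax. destruct (Rle_dec _ _).
  - apply (termC1 g j N Hg Hj HNj).
  - apply (termC0 g j N Hg Hj HNj). }
pose proof (termA g j N Hg Hj HNj) as TA.
pose proof (sumABC g Hg) as S.
replace (X * (pp g N + 4 * qq g N / M1 + 4 * qq g (N - 1) / M2))
  with (X * pp g N + 4*qq g N * (X/M1) + 4*qq g (N-1) * (X/M2)) by (unfold Rdiv; ring).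
assert (X * pp g N <= pp g N) by nra.
lra.
Qed.

Theorem propositionA1 (g : R) (hg : 0 < g) :
  exists alpha : nat -> R,
    (forall n : nat, (2 <= n)%nat -> 0 < alpha n) /\
    alpha 1%nat = 0 /\
    exists c : R, c < 1 /\
      forall n : nat, (2 <= n)%nat ->
        (1 + 2 * nu g n) *
          (p_ g n + Rabs (q_ g n) / alpha n
                  + Rabs (q_ g (n - 1)) * alpha (n - 1)%nat) <= c.
Proof.
set (mu := g/((4+3*g)*(2*g+1))).
set (w := g/(2*g+1)).
assert (Hmu : 0 < mu) by (apply divpos; [lra| apply Rmult_lt_0_compat; lra]).
assert (Hw : 0 < w) by (apply divpos; lra).
assert (Hmarg : forall n, (2 <= n)%nat -> mu <= marg g n) by (intros; apply marg_lb; assumption).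
exists (alpha g). split; [|split].
- intros n Hn. unfold alpha.
  replace (n <=? 1)%nat with false by (symmetry; apply Nat.leb_gt; lia).
  destruct (Nat.even n).
  + apply divpos; [pose proof (q_abs_pos g n hg ltac:(lia)); lra|].
    pose proof (Hmarg n Hn); lra.
  + apply divpos; [pose proof (Hmarg (S n) ltac:(lia)); lra|].
    pose proof (q_abs_pos g n hg ltac:(lia)); lra.
- reflexivity.
- exists (Rmax (1 - mu*w/2) (97/100)). split.
  { apply Rmax_lub_lt; [|lra]. pose proof (Rmult_lt_0_compat _ _ Hmu Hw). lra. }
  intros n Hn.
  assert (H1 : (n <=? 1)%nat = false) by (apply Nat.leb_gt; lia).
  destruct (Nat.even n) eqn:E.
  +
    destruct (proj1 (Nat.even_spec n) E) as [k Hk].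
    assert (Hs : (-1)^n = 1) by (rewrite Hk; apply pow_1_even).
    unfold nu. rewrite Hs.
    assert (Hal : alpha g n = 4 * Rabs (q_ g n) / marg g n) by (unfold alpha; rewrite H1, E; reflexivity).
    pose proof (q_abs_pos g n hg ltac:(lia)) as Hq.
    pose proof (Hmarg n Hn) as HM.
    assert (T1 : Rabs (q_ g n) / alpha g n = marg g n / 4) by (rewrite Hal; field; split; lra).
    rewrite T1.
    assert (T2 : 0 <= Rabs (q_ g (n-1)) * alpha g (n-1) <= marg g n / 4).
    { destruct (Nat.eq_dec n 2) as [->|Hn2].
      - replace (alpha g (2-1)%nat) with 0 by reflexivity. split; lra.
      - assert (H1' : (n-1 <=? 1)%nat = false) by (apply Nat.leb_gt; lia).
        destruct (Nat.even (n-1)) eqn:E2.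
        { exfalso. apply Nat.even_spec in E2. destruct E2 as [m Hm]. lia. }
        assert (Hal2 : alpha g (n-1) = marg g n / (4 * Rabs (q_ g (n-1)))).
        { unfold alpha. rewrite H1', E2. replace (S (n-1)) with n by lia. reflexivity. }
        pose proof (q_abs_pos g (n-1) hg ltac:(lia)) as Hq2.
        rewrite Hal2. replace (Rabs (q_ g (n - 1)) * (marg g n / (4 * Rabs (q_ g (n - 1)))))
          with (marg g n / 4) by (field; lra). split; lra. }
    apply Rle_trans with (1 - mu*w/2); [|apply Rmax_l].
    set (r := gamma_ratio g n) in *.
    assert (Hr0 : 0 < r) by apply gr_pos, hg.
    assert (Hr : r <= (g+1)/(2*(2*g+1))) by (unfold r; rewrite <- gr2 by exact hg; apply gr_mono; [exact hg|lia]).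
    assert (Hw2 : w <= 1 - 2*r).
    { unfold w. replace (g/(2*g+1)) with (1 - 2*((g+1)/(2*(2*g+1)))) by (field; lra). lra. }
    assert (HMw : mu * w <= marg g n * (1 - 2*r)).
    { apply Rmult_le_compat; lra. }
    assert (HMdef : marg g n = 1 - (1 + 2*r) * p_ g n) by reflexivity.
    set (M := marg g n) in *. set (P := p_ g n) in *.
    set (X := Rabs (q_ g (n - 1)) * alpha g (n - 1)) in *.
    nra.
  +
    assert (Eo : Nat.odd n = true) by (rewrite <- Nat.negb_even, E; reflexivity).
    destruct (proj1 (Nat.odd_spec n) Eo) as [k Hk].
    assert (Hs : (-1)^n = -1) by (rewrite Hk; replace (2*k+1)%nat with (S (2*k)) by lia; apply pow_1_odd).
    unfold nu. rewrite Hs.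
    assert (Hn3 : (3 <= n)%nat) by lia.
    assert (Hal : alpha g n = marg g (S n) / (4 * Rabs (q_ g n))) by (unfold alpha; rewrite H1, E; reflexivity).
    assert (H1' : (n-1 <=? 1)%nat = false) by (apply Nat.leb_gt; lia).
    assert (E2 : Nat.even (n-1) = true) by (apply Nat.even_spec; exists k; lia).
    assert (Hal2 : alpha g (n-1) = 4 * Rabs (q_ g (n-1)) / marg g (n-1)) by (unfold alpha; rewrite H1', E2; reflexivity).
    pose proof (q_abs_pos g n hg ltac:(lia)) as Hq.
    pose proof (q_abs_pos g (n-1) hg ltac:(lia)) as Hq2.
    pose proof (Hmarg (S n) ltac:(lia)) as HMp.
    pose proof (Hmarg (n-1)%nat ltac:(lia)) as HMm.
    rewrite Hal, Hal2.
    replace (Rabs (q_ g n) / (marg g (S n) / (4 * Rabs (q_ g n))))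
      with (4 * (Rabs (q_ g n) * Rabs (q_ g n)) / marg g (S n)) by (field; lra).
    replace (Rabs (q_ g (n-1)) * (4 * Rabs (q_ g (n-1)) / marg g (n-1)))
      with (4 * (Rabs (q_ g (n-1)) * Rabs (q_ g (n-1))) / marg g (n-1)) by (field; lra).
    rewrite !q_sq by (try exact hg; lia).
    apply Rle_trans with (97/100); [|apply Rmax_r].
    replace (1 + 2 * (-1 * gamma_ratio g n)) with (1 - 2 * gamma_ratio g n) by ring.
    destruct n as [|m]; [lia|].
    replace (S m - 1)%nat with m in * by lia.
    assert (HNm : INR m = INR (S m) - 1) by (rewrite S_INR; ring).
    assert (H0 : 0 <= INR m) by apply pos_INR.
    apply (odd_key g (INR (S m)) (INR m) (INR (S (S m))) (gamma_ratio g (S m))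
             (gamma_ratio g (S (S m))) (gamma_ratio g m)).
    * exact hg.
    * replace 3 with (INR 3) by (simpl; ring). apply le_INR; lia.
    * apply gr_pos, hg.
    * rewrite <- gr3 by exact hg. apply gr_mono; [exact hg | lia].
    * exact HNm.
    * apply S_INR.
    * rewrite gr_S. unfold Rdiv. ring.
    * rewrite gr_S, S_INR. field. split; lra.
Qed.
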